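(* Let $\mathcal{R}$ be a set of records equipped with a record-merge operation $\oplus:\mathcal{R}\times\mathcal{R}\to\mathcal{R}$, and let $(\Phi,\prec)$ be the partially ordered set of execution phases described in the context. Let $\mathcal{W}$ be a wisdom library that is phase-correct, and let $p_1,\ldots,p_n\in\mathcal{W}$ ($n\ge 1$) be in valid phase order, i.e. $\phi(p_1)\prec\phi(p_2)\prec\cdots\prec\phi(p_n)$. Suppose each $p_i$ is individually correct: for all $x\in I_{p_i}$, $p_i(x)\in O_{p_i}$. Then the composed pipeline $P=p_1\mathbin{;}\cdots\mathbin{;}p_n$ is correct: for every $x\in I_{p_1}$, every intermediate input $x_i$ lies in $I_{p_i}$ (so the pipeline is well defined), and its output $P(x)=p_n(x_n)$ lies in $O_{p_n}$.
   Context: A wisdom program $p$ consists of an execution phase $\phi(p)\in\Phi$, an input schema $I_p\subseteq\mathcal{R}$, an output schema $O_p\subseteq\mathcal{R}$, and a function (its denotation) $x\mapsto p(x)$ defined on $I_p$ with values in $\mathcal{R}$. A wisdom library $\mathcal{W}$ is a finite set of wisdom programs. The phase set is $\Phi=\{\mathsf{pre},\mathsf{ctx},\mathsf{post},\mathsf{auto},\mathsf{render},\mathsf{rel},\mathsf{agg},\mathsf{idx}\}$, partially ordered by the order $\prec$ generated by $\mathsf{pre}\prec\mathsf{ctx}\prec\mathsf{agg}\prec\mathsf{post}\prec\mathsf{render}$, $\mathsf{rel}\prec\mathsf{agg}$, $\mathsf{post}\prec\mathsf{auto}$, with $\mathsf{idx}$ incomparable to all others. Sequential composition $p\mathbin{;}q$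 (for $\phi(p)\prec\phi(q)$) runs $p$ on input $x$ and then runs $q$ on the merged input $x\oplus p(x)$; here $\oplus$ is schema-compatible record merge (fields of $x$ are preserved and fields of $p(x)$ are added). Accordingly, the pipeline $p_1\mathbin{;}\cdots\mathbin{;}p_n$ on input $x$ is defined by $x_1=x$, $x_{i+1}=x_i\oplus p_i(x_i)$ for $1\le i<n$, with output $p_n(x_n)$. A wisdom library $\mathcal{W}$ is phase-correct if: (a) for every $p,q\in\mathcal{W}$ with $\phi(p)\prec\phi(q)$ and every $x\in I_p$, one has $x\oplus p(x)\in I_q$; (b) the aggregation program (phase $\mathsf{agg}$) accepts as input the union of all outputs of programs with phase $\prec\mathsf{agg}$; and (c) the rendering programs (phase $\mathsf{render}$) accept the output of the aggregation program as input. *)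

(* Defs.v *)
From Stdlib Require Import List Relations.
Import ListNotations.
Set Implicit Arguments.

Inductive phase : Type := pre | ctx | post | auto | render | rel | agg | idx.

Inductive phase_gen : phase -> phase -> Prop :=
| g_pre_ctx : phase_gen pre ctx
| g_ctx_agg : phase_gen ctx agg
| g_agg_post : phase_gen agg post
| g_post_render : phase_gen post render
| g_rel_agg : phase_gen rel agg
| g_post_auto : phase_gen post auto.

Definition phase_lt : phase -> phase -> Prop := clos_trans phase phase_gen.

Record wprog (R : Type) : Type := WProg {
  wphase : phase;
  winp : R -> Prop;
  wout : R -> Prop;
  wfun : R -> R       (* denotation; only meaningful on I_p *)
}.

Definition library (R : Type) := list (wprog R).

Section Defs.
Variable R : Type.
Variable merge : R -> R -> R.

Definition phase_correct (W : library R) : Prop :=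
  (forall p q, In p W -> In q W -> phase_lt (wphase p) (wphase q) ->
     forall x, winp p x -> winp q (merge x (wfun p x))) /\
  (forall a p, In a W -> wphase a = agg -> In p W -> phase_lt (wphase p) agg ->
     forall y, wout p y -> winp a y) /\
  (forall a r, In a W -> wphase a = agg -> In r W -> wphase r = render ->
     forall y, wout a y -> winp r y).

Fixpoint phase_chain (ps : list (wprog R)) : Prop :=
  match ps with
  | p :: ((q :: _) as ps') => phase_lt (wphase p) (wphase q) /\ phase_chain ps'
  | _ => True
  end.

Fixpoint pipeline_inputs (x : R) (ps : list (wprog R)) : list R :=
  match ps with
  | [] => []
  | p :: ps' => x :: pipeline_inputs (merge x (wfun p x)) ps'
  end.

Fixpoint pipeline_output (x : R) (p : wprog R) (ps : list (wprog R)) : R :=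
  match ps with
  | [] => wfun p x
  | q :: qs => pipeline_output (merge x (wfun p x)) q qs
  end.
End Defs.

(* Main.v *)
Require Import Defs.
From Stdlib Require Import List.

Lemma aux (R : Type) (merge : R -> R -> R) (W : library R) :
  phase_correct merge W ->
  forall (ps : list (wprog R)) (p1 : wprog R),
  (forall p, In p (p1 :: ps) -> In p W) ->
  phase_chain (p1 :: ps) ->
  (forall p, In p (p1 :: ps) -> forall x, winp p x -> wout p (wfun p x)) ->
  forall x, winp p1 x ->
    Forall2 (fun p y => winp p y) (p1 :: ps) (pipeline_inputs merge x (p1 :: ps)) /\
    wout (last ps p1) (pipeline_output merge x p1 ps).
Proof.
  intros [Ha _] ps. induction ps as [|q qs IH]; intros p1 HW Hc Ho x Hx.
  - simpl. split. constructor; auto. apply Ho; simpl; auto.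
  - destruct Hc as [Hlt Hc].
    assert (Hq : winp q (merge x (wfun p1 x))).
    { apply (Ha p1 q); simpl in *; auto. }
    destruct (IH q) with (x := merge x (wfun p1 x)) as [H1 H2]; auto.
    + intros p Hp. apply HW. simpl. right. exact Hp.
    + intros p Hp. apply Ho. simpl. right. exact Hp.
    + split.
      * simpl. constructor; auto.
      * replace (last (q :: qs) p1) with (last qs q).
        -- exact H2.
        -- clear. revert q. induction qs as [|r rs IH']; intros q; simpl; auto.
           destruct rs; auto.
Qed.

Theorem theorem4p2 (R : Type) (merge : R -> R -> R) (W : library R)
  (p1 : wprog R) (ps : list (wprog R)) :
  phase_correct merge W ->
  (forall p, In p (p1 :: ps) -> In p W) ->
  phase_chain (p1 :: ps) ->
  (forall p, In p (p1 :: ps) -> forall x, winp p x -> wout p (wfun p x)) ->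
  forall x, winp p1 x ->
    Forall2 (fun p y => winp p y) (p1 :: ps) (pipeline_inputs merge x (p1 :: ps)) /\
    wout (last ps p1) (pipeline_output merge x p1 ps).
Proof.
  intros H. exact (@aux R merge W H ps p1).
Qed.
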